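(* Let $(A,[\cdot,\cdot]_1,\circ_1)$ be a Malcev-Poisson algebra and let $(A^*,[\cdot,\cdot]_2,\circ_2)$ be a Malcev-Poisson algebra structure on the dual space $A^*$. Then $(A\oplus A^*,A,A^* )$ is a standard Manin triple of Malcev-Poisson algebras if and only if $(A,A^*,\mathrm{ad}_A^*,-L^*,\mathrm{ad}_{A^*}^*,-\mathcal{L}_{A^*}^* )$ is a matched pair of Malcev-Poisson algebras.
   Context: All vector spaces are finite-dimensional over an algebraically closed field $\mathbb{K}$ of characteristic $0$. A Malcev algebra is a vector space with an antisymmetric bilinear bracket satisfying $J(x,y,[x,z])=[J(x,y,z),x]$, where $J(x,y,z)=[[x,y],z]+[[z,x],y]+[[y,z],x]$. A Malcev-Poisson algebra $(A,[\cdot,\cdot],\circ)$: a Malcev bracket and a commutative associative product $\circ$ with $[x,y\circ z]=[x,y]\circ z+y\circ[x,z]$. Representations: of a Malcev algebra, a linear $\varrho:A\to\mathrm{End}(V)$ with $\varrho([[x,y],z])=\varrho(z)\varrho(y)\varrho(x)-\varrho(y)\varrho(x)\varrho(z)+\varrho(x)\varrho([y,z])+\varrho([x,z])\varrho(y)$; of a commutative associative algebra, $\mu$ with $\mu(x\circ y)=\mu(x)\mu(y)$; of a Malcev-Poisson algebra, a pair $(\varrho,\mu)$ of these with $\varrho(x\circ y)=\mu(y)\varrho(x)+\mu(x)\varrho(y)$ and $\mu([x,y])=\varrho(x)\mu(y)-\mu(y)\varrho(x)$. Notation: for $\theta:A\to\mathrm{End}(V)$, $\theta^*:A\to\mathrm{End}(V^*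 )$ is $\langle\theta^*(x)\xi,v\rangle=-\langle\xi,\theta(x)v\rangle$. $\mathrm{ad}(x)y=[x,y]_1$, $L(x)y=x\circ_1y$ on $A$; $\mathrm{ad}_A^*=\mathrm{ad}^*$, $L^*$ are their duals (maps $A\to\mathrm{End}(A^* )$); similarly $\mathrm{ad}_{A^*}^*$, $\mathcal{L}_{A^*}^*:A^*\to\mathrm{End}(A)$ are the duals of $\xi\mapsto[\xi,\cdot]_2$, $\xi\mapsto\xi\circ_2\cdot$ (with $A^{**}=A$), i.e. $\langle \mathrm{ad}_{A^*}^*(\xi)x,\eta\rangle=-\langle x,[\xi,\eta]_2\rangle$, $\langle\mathcal{L}_{A^*}^*(\xi)x,\eta\rangle=-\langle x,\xi\circ_2\eta\rangle$. Matched pair of Malcev-Poisson algebras $(A_1,A_2,\varrho_1,\mu_1,\varrho_2,\mu_2)$ ($\varrho_1,\mu_1:A_1\to\mathrm{End}(A_2)$, $\varrho_2,\mu_2:A_2\to\mathrm{End}(A_1)$): (i) $\mu_1,\mu_2$ are associative representations with $\mu_1(x_1)(x_2\circ_2y_2)=(\mu_1(x_1)x_2)\circ_2y_2+\mu_1(\mu_2(x_2)x_1)y_2$ and $\mu_2(x_2)(x_1\circ_1y_1)=(\mu_2(x_2)x_1)\circ_1y_1+\mu_2(\mu_1(x_1)x_2)y_1$; (ii) $\varrho_1,\varrho_2$ are Malcev representations such that the bracket $[x_1+x_2,y_1+y_2]=[x_1,y_1]_1+\varrho_2(x_2)y_1-\varrho_2(y_2)x_1+[x_2,y_2]_2+\varrho_1(x_1)y_2-\varrho_1(y_1)x_2$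 on $A_1\oplus A_2$ is a Malcev bracket (matched pair of Malcev algebras); (iii) $(A_2,\varrho_1,\mu_1)$, $(A_1,\varrho_2,\mu_2)$ are Malcev-Poisson representations; (iv) for all $x_i,y_i\in A_i$: $\varrho_2(x_2)(x_1\circ_1y_1)=(\varrho_2(x_2)x_1)\circ_1y_1+x_1\circ_1(\varrho_2(x_2)y_1)-\mu_2(\varrho_1(x_1)x_2)y_1-\mu_2(\varrho_1(y_1)x_2)x_1$; $\varrho_1(x_1)(x_2\circ_2y_2)=(\varrho_1(x_1)x_2)\circ_2y_2+x_2\circ_2(\varrho_1(x_1)y_2)-\mu_1(\varrho_2(x_2)x_1)y_2-\mu_1(\varrho_2(y_2)x_1)x_2$; $[x_1,\mu_2(x_2)y_1]_1-\varrho_2(\mu_1(y_1)x_2)x_1=\mu_2(\varrho_1(x_1)x_2)y_1-(\varrho_2(x_2)x_1)\circ_1y_1+\mu_2(x_2)[x_1,y_1]_1$; $[x_2,\mu_1(x_1)y_2]_2-\varrho_1(\mu_2(y_2)x_1)x_2=\mu_1(\varrho_2(x_2)x_1)y_2-(\varrho_1(x_1)x_2)\circ_2y_2+\mu_1(x_1)[x_2,y_2]_2$. A standard Manin triple of Malcev-Poisson algebras $(A\oplus A^*,A,A^* )$ means: a Malcev-Poisson algebra structure on $A\oplus A^*$ for which $(A,[\cdot,\cdot]_1,\circ_1)$ and $(A^*,[\cdot,\cdot]_2,\circ_2)$ are Malcev-Poisson subalgebras and the bilinear form $\omega_d(x+\xi,y+\eta)=\langle x,\eta\rangle+\langle\xi,y\rangle$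 is invariant: $\omega_d(u\circ v,w)=\omega_d(u,v\circ w)$ and $\omega_d([u,v],w)=\omega_d(u,[v,w])$ for all $u,v,w\in A\oplus A^*$. *)

(* Defs.v *)
From HB Require Import structures.
From mathcomp Require Import all_boot all_order all_algebra.
Set Implicit Arguments. Unset Strict Implicit. Unset Printing Implicit Defensive.
Import GRing.Theory.
Local Open Scope ring_scope.

Section Defs.
Variable K : fieldType.

Definition linear_fun (V W : lmodType K) (f : V -> W) :=
  forall (a : K) x y, f (a *: x + y) = a *: f x + f y.

Definition bilin (U V W : lmodType K) (b : U -> V -> W) :=
  (forall y, linear_fun (fun x => b x y)) /\ (forall x, linear_fun (b x)).

Definition jacobiator (V : lmodType K) (br : V -> V -> V) (x y z : V) :=
  br (br x y) z + br (br z x) y + br (br y z) x.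

Definition malcev (V : lmodType K) (br : V -> V -> V) :=
  bilin br /\ (forall x y, br x y = - br y x) /\
  (forall x y z, jacobiator br x y (br x z) = br (jacobiator br x y z) x).

Definition malcev_poisson (V : lmodType K) (br pr : V -> V -> V) :=
  malcev br /\ bilin pr /\ (forall x y, pr x y = pr y x) /\
  (forall x y z, pr (pr x y) z = pr x (pr y z)) /\
  (forall x y z, br x (pr y z) = pr (br x y) z + pr y (br x z)).

Definition malcev_rep (A V : lmodType K) (brA : A -> A -> A) (r : A -> V -> V) :=
  bilin r /\
  (forall x y z v, r (brA (brA x y) z) v =
     r z (r y (r x v)) - r y (r x (r z v)) + r x (r (brA y z) v) + r (brA x z) (r y v)).

Definition assoc_rep (A V : lmodType K) (prA : A -> A -> A) (m : A -> V -> V) :=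
  bilin m /\ (forall x y v, m (prA x y) v = m x (m y v)).

Definition mp_rep (A V : lmodType K) (brA prA : A -> A -> A) (r m : A -> V -> V) :=
  malcev_rep brA r /\ assoc_rep prA m /\
  (forall x y v, r (prA x y) v = m y (r x v) + m x (r y v)) /\
  (forall x y v, m (brA x y) v = r x (m y v) - m y (r x v)).

Definition mp_bracket (A1 A2 : lmodType K) (br1 : A1 -> A1 -> A1) (br2 : A2 -> A2 -> A2)
  (r1 : A1 -> A2 -> A2) (r2 : A2 -> A1 -> A1) (u v : A1 * A2) : A1 * A2 :=
  (br1 u.1 v.1 + r2 u.2 v.1 - r2 v.2 u.1, br2 u.2 v.2 + r1 u.1 v.2 - r1 v.1 u.2).

Definition matched_pair (A1 A2 : lmodType K)
  (br1 pr1 : A1 -> A1 -> A1) (br2 pr2 : A2 -> A2 -> A2)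
  (r1 m1 : A1 -> A2 -> A2) (r2 m2 : A2 -> A1 -> A1) :=
  [/\ assoc_rep pr1 m1, assoc_rep pr2 m2,
      (forall x1 x2 y2, m1 x1 (pr2 x2 y2) = pr2 (m1 x1 x2) y2 + m1 (m2 x2 x1) y2) &
      (forall x2 x1 y1, m2 x2 (pr1 x1 y1) = pr1 (m2 x2 x1) y1 + m2 (m1 x1 x2) y1)] /\
  [/\ malcev_rep br1 r1, malcev_rep br2 r2 & malcev (mp_bracket br1 br2 r1 r2)] /\
  (mp_rep br1 pr1 r1 m1 /\ mp_rep br2 pr2 r2 m2) /\
  [/\ (forall x1 y1 x2, r2 x2 (pr1 x1 y1) =
          pr1 (r2 x2 x1) y1 + pr1 x1 (r2 x2 y1) - m2 (r1 x1 x2) y1 - m2 (r1 y1 x2) x1),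
      (forall x2 y2 x1, r1 x1 (pr2 x2 y2) =
          pr2 (r1 x1 x2) y2 + pr2 x2 (r1 x1 y2) - m1 (r2 x2 x1) y2 - m1 (r2 y2 x1) x2),
      (forall x1 y1 x2, br1 x1 (m2 x2 y1) - r2 (m1 y1 x2) x1 =
          m2 (r1 x1 x2) y1 - pr1 (r2 x2 x1) y1 + m2 x2 (br1 x1 y1)) &
      (forall x2 y2 x1, br2 x2 (m1 x1 y2) - r1 (m2 y2 x1) x2 =
          m1 (r2 x2 x1) y2 - pr2 (r1 x1 x2) y2 + m1 x1 (br2 x2 y2))].

(* A = K^n as row vectors, and A^* identified with K^n via the pairing *)
Definition pairing (n : nat) (x xi : 'rV[K]_n) : K := \sum_(i < n) x 0 i * xi 0 i.

(* dual action: <dualop th x xi, v> = - <xi, th x v>  (written in coordinates) *)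
Definition dualop (n : nat) (th : 'rV[K]_n -> 'rV[K]_n -> 'rV[K]_n)
  (x xi : 'rV[K]_n) : 'rV[K]_n :=
  \row_(j < n) - pairing xi (th x (delta_mx 0 j)).

Definition omega_d (n : nat) (u v : 'rV[K]_n * 'rV[K]_n) : K :=
  pairing u.1 v.2 + pairing u.2 v.1.

Definition std_manin_triple (n : nat) (br1 pr1 br2 pr2 : 'rV[K]_n -> 'rV[K]_n -> 'rV[K]_n) :=
  exists br pr : 'rV[K]_n * 'rV[K]_n -> 'rV[K]_n * 'rV[K]_n -> 'rV[K]_n * 'rV[K]_n,
  [/\ malcev_poisson br pr,
      (forall x y, br (x, 0) (y, 0) = (br1 x y, 0)) /\ (forall x y, pr (x, 0) (y, 0) = (pr1 x y, 0)),
      (forall xi eta, br (0, xi) (0, eta) = (0, br2 xi eta)) /\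
      (forall xi eta, pr (0, xi) (0, eta) = (0, pr2 xi eta)) &
      (forall u v w, omega_d (pr u v) w = omega_d u (pr v w)) /\
      (forall u v w, omega_d (br u v) w = omega_d u (br v w))].

End Defs.

(* Main.v *)
Require Import Defs.
From HB Require Import structures.
From mathcomp Require Import all_boot all_order all_algebra ring.
From Stdlib Require Import FunctionalExtensionality.
Set Implicit Arguments. Unset Strict Implicit. Unset Printing Implicit Defensive.
Import GRing.Theory.
Local Open Scope ring_scope.

Section Basics.
Variable K : fieldType.

Section Lin.
Variables (U W : lmodType K) (f : U -> W) (hf : linear_fun f).
Lemma linD x y : f (x + y) = f x + f y.
Proof. by rewrite -[x]scale1r hf !scale1r. Qed.
Lemma lin0 : f 0 = 0.
Proof. by apply: (addrI (f 0)); rewrite -linD !addr0. Qed.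
Lemma linZ a x : f (a *: x) = a *: f x.
Proof. by rewrite -[a *: x]addr0 hf lin0 addr0. Qed.
Lemma linN x : f (- x) = - f x.
Proof. by rewrite -scaleN1r linZ scaleN1r. Qed.
End Lin.

Section Bil.
Variables (U1 U2 W : lmodType K) (b : U1 -> U2 -> W) (hb : bilin b).
Lemma bDl x y z : b (x + y) z = b x z + b y z. Proof. exact: (linD (hb.1 z)). Qed.
Lemma bDr x y z : b x (y + z) = b x y + b x z. Proof. exact: (linD (hb.2 x)). Qed.
Lemma bNl x z : b (- x) z = - b x z. Proof. exact: (linN (hb.1 z)). Qed.
Lemma bNr x z : b x (- z) = - b x z. Proof. exact: (linN (hb.2 x)). Qed.
Lemma b0l z : b 0 z = 0. Proof. exact: (lin0 (hb.1 z)). Qed.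
Lemma b0r z : b z 0 = 0. Proof. exact: (lin0 (hb.2 z)). Qed.
Lemma bZl a x z : b (a *: x) z = a *: b x z. Proof. exact: (linZ (hb.1 z)). Qed.
Lemma bZr a x z : b x (a *: z) = a *: b x z. Proof. exact: (linZ (hb.2 x)). Qed.
End Bil.

Variable n : nat.
Local Notation V := 'rV[K]_n.

Definition coord (j : 'I_n) (v : V) : K := v 0 j.
Lemma coordD j u v : coord j (u + v) = coord j u + coord j v. Proof. by rewrite /coord mxE. Qed.
Lemma coordN j u : coord j (- u) = - coord j u. Proof. by rewrite /coord mxE. Qed.
Lemma coordZ j a u : coord j (a *: u) = a * coord j u. Proof. by rewrite /coord mxE. Qed.
Lemma coord0 j : coord j 0 = 0. Proof. by rewrite /coord mxE. Qed.
Lemma coord_inj u v : (forall j, coord j u = coord j v) -> u = v.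
Proof. by move=> h; apply/rowP => j; apply: h. Qed.

Lemma pairingDl (x y z : V) : pairing (x + y) z = pairing x z + pairing y z.
Proof. by rewrite /pairing -big_split; apply: eq_bigr => i _; rewrite mxE mulrDl. Qed.
Lemma pairingDr (x y z : V) : pairing x (y + z) = pairing x y + pairing x z.
Proof. by rewrite /pairing -big_split; apply: eq_bigr => i _; rewrite mxE mulrDr. Qed.
Lemma pairingZl a (x z : V) : pairing (a *: x) z = a * pairing x z.
Proof. by rewrite /pairing mulr_sumr; apply: eq_bigr => i _; rewrite mxE mulrA. Qed.
Lemma pairingZr a (x z : V) : pairing x (a *: z) = a * pairing x z.
Proof. by rewrite /pairing mulr_sumr; apply: eq_bigr => i _; rewrite mxE mulrCA. Qed.
Lemma pairingC (x y : V) : pairing x y = pairing y x.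
Proof. by rewrite /pairing; apply: eq_bigr => i _; rewrite mulrC. Qed.
Lemma pairingNl (x z : V) : pairing (- x) z = - pairing x z.
Proof. by rewrite -scaleN1r pairingZl mulN1r. Qed.
Lemma pairingNr (x z : V) : pairing x (- z) = - pairing x z.
Proof. by rewrite -scaleN1r pairingZr mulN1r. Qed.
Lemma pairing0l (z : V) : pairing 0 z = 0.
Proof. by rewrite /pairing big1 // => i _; rewrite mxE mul0r. Qed.
Lemma pairing0r (z : V) : pairing z 0 = 0.
Proof. by rewrite pairingC pairing0l. Qed.
Lemma pairing_delta j (z : V) : pairing (delta_mx 0 j) z = z 0 j.
Proof.
rewrite /pairing (bigD1 j) //= big1 ?addr0; first by rewrite mxE !eqxx mul1r.
by move=> i /negbTE ij; rewrite mxE ij andbF mul0r.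
Qed.
Lemma nondeg (u v : V) : (forall w, pairing w u = pairing w v) -> u = v.
Proof. by move=> h; apply/rowP => j; rewrite -!pairing_delta. Qed.

Lemma vec_decomp (v : V) : v = \sum_(j < n) v 0 j *: delta_mx 0 j.
Proof.
apply/rowP => k; rewrite summxE (bigD1 k) //= big1 ?addr0.
  by rewrite !mxE !eqxx mulr1.
by move=> i ik; rewrite !mxE eq_sym (negbTE ik) andbF mulr0.
Qed.

Lemma lin_sum (W : lmodType K) (f : V -> W) (hf : linear_fun f) (I : Type) (r : seq I) P (F : I -> V) :
  f (\sum_(i <- r | P i) F i) = \sum_(i <- r | P i) f (F i).
Proof.
elim/big_rec2: _ => [|i y1 y2 _ <-]; first exact: lin0.
exact: linD.
Qed.

Lemma pairing_sumr (xi : V) (I : Type) (r : seq I) P (F : I -> V) :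
  pairing xi (\sum_(i <- r | P i) F i) = \sum_(i <- r | P i) pairing xi (F i).
Proof.
elim/big_rec2: _ => [|i y1 y2 _ <-]; first exact: pairing0r.
exact: pairingDr.
Qed.

Lemma dualop_pair (th : V -> V -> V) (x xi v : V) : linear_fun (th x) ->
  pairing (dualop th x xi) v = - pairing xi (th x v).
Proof.
move=> hl; rewrite {2}(vec_decomp v) (lin_sum hl) pairing_sumr -sumrN.
rewrite /pairing; apply: eq_bigr => j _.
rewrite (linZ hl) -/(pairing _ _) pairingZr mxE; ring.
Qed.
End Basics.


Section Gen.
Variable K : fieldType.
Variable n : nat.
Local Notation V := 'rV[K]_n.

Lemma lcs (k a b c d : K) : a = b -> c - k * a = d - k * b -> c = d.
Proof. by move=> -> /(congr1 (fun t => t + k * b)); rewrite !subrK. Qed.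

Lemma scaleK (m : nat) (h : m%:R != 0 :> K) (c d : K) : m%:R * c = m%:R * d -> c = d.
Proof. by move/(congr1 (fun t => (m%:R)^-1 * t)); rewrite !mulrA mulVf // !mul1r. Qed.

Lemma dualop_bilin (th : V -> V -> V) : bilin th -> bilin (dualop th).
Proof.
move=> hb; split => [xi a x y | x a xi eta]; apply/rowP => j; rewrite !mxE.
  by rewrite (bDl hb) (bZl hb) pairingDr pairingZr; ring.
by rewrite pairingDl pairingZl; ring.
Qed.

Lemma dpL (th : V -> V -> V) (hb : bilin th) x xi v :
  pairing (dualop th x xi) v = - pairing xi (th x v).
Proof. exact: dualop_pair (hb.2 x). Qed.
Lemma dpR (th : V -> V -> V) (hb : bilin th) x xi v :
  pairing v (dualop th x xi) = - pairing xi (th x v).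
Proof. by rewrite pairingC; exact: dualop_pair (hb.2 x). Qed.

Section Coad.
Variables (br pr : V -> V -> V) (hmp : malcev_poisson br pr) (hch : 2%:R != 0 :> K).
Let hb : bilin br := hmp.1.1.
Let antiB : forall x y, br x y = - br y x := hmp.1.2.1.
Let malc := hmp.1.2.2.
Let hp : bilin pr := hmp.2.1.
Let commP : forall x y, pr x y = pr y x := hmp.2.2.1.
Let assocP : forall x y z, pr (pr x y) z = pr x (pr y z) := hmp.2.2.2.1.
Let leib : forall x y z, br x (pr y z) = pr (br x y) z + pr y (br x z) := hmp.2.2.2.2.
Let hdb := dualop_bilin hb.
Let hdp := dualop_bilin hp.

Ltac expand := unfold jacobiator; repeat progress rewrite ?(bDl hb) ?(bDr hb) ?(bNl hb) ?(bNr hb) ?(b0l hb) ?(b0r hb)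
  ?(bDl hp) ?(bDr hp) ?(bNl hp) ?(bNr hp) ?(b0l hp) ?(b0r hp)
  ?(bDl hdb) ?(bDr hdb) ?(bNl hdb) ?(bNr hdb) ?(b0l hdb) ?(b0r hdb)
  ?(bDl hdp) ?(bDr hdp) ?(bNl hdp) ?(bNr hdp) ?(b0l hdp) ?(b0r hdp)
  ?coordD ?coordN ?coord0 ?pairingDl ?pairingDr ?pairingNl ?pairingNr ?pairing0l ?pairing0r
  ?(dpL hb) ?(dpR hb) ?(dpL hp) ?(dpR hp) ?opprK.

Lemma malc_lin x y z t : jacobiator br x y (br t z) + jacobiator br t y (br x z) =
  br (jacobiator br x y z) t + br (jacobiator br t y z) x.
Proof.
apply: coord_inj => j.
have H0 := congr1 (coord j) (malc (x + t) y z).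
have H1 := congr1 (coord j) (malc x y z).
have H2 := congr1 (coord j) (malc t y z).
move: H0 H1 H2.
expand.
rewrite ?(antiB z t) ?(antiB z x).
expand.
rewrite ?(antiB (br x y) (br t z)) ?(antiB y (br t z)) ?(antiB y (br x z)).
expand.
move=> H0 H1 H2.
apply: (@lcs 1 _ _ _ _ H0).
apply: (@lcs (-1) _ _ _ _ H1).
apply: (@lcs (-1) _ _ _ _ H2).
ring.
Qed.

Lemma kuz x y z w : br (br (br x y) z) w =
  br x (br y (br z w)) - br z (br x (br y w)) - br (br y z) (br x w) - br y (br (br x z) w).
Proof.
apply: coord_inj => j.
have H0 := congr1 (coord j) (malc_lin x y z w).
have H1 := congr1 (coord j) (malc_lin x z w y).
have H2 := congr1 (coord j) (malc_lin x w y z).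
move: H0 H1 H2.
expand.
rewrite ?(antiB x w) ?(antiB y w) ?(antiB y x) ?(antiB z w) ?(antiB z x) ?(antiB z y).
expand.
rewrite ?(antiB (br x y) (br w z)) ?(antiB (br x z) (br w y)) ?(antiB (br y z) (br w x)) ?(antiB w (br x y)) ?(antiB w (br y z)) ?(antiB x (br w y)) ?(antiB y (br w z)) ?(antiB y (br x z)) ?(antiB z (br w x)) ?(antiB z (br w y)).
expand.
rewrite ?(antiB x (br (br w z) y)) ?(antiB y (br (br x z) w)) ?(antiB z (br (br w y) x)).
expand.
move=> H0 H1 H2.
apply: (scaleK hch).
apply: (@lcs (-1) _ _ _ _ H0).
apply: (@lcs 1 _ _ _ _ H1).
apply: (@lcs 1 _ _ _ _ H2).
ring.
Qed.

Lemma coad_rep x y z v : dualop br (br (br x y) z) v =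
  dualop br z (dualop br y (dualop br x v)) - dualop br y (dualop br x (dualop br z v)) +
  dualop br x (dualop br (br y z) v) + dualop br (br x z) (dualop br y v).
Proof.
apply: nondeg => w.
have H0 := congr1 (pairing v) (kuz x y z w).
move: H0.
expand.
rewrite ?(antiB x w) ?(antiB y w) ?(antiB z w).
expand.
rewrite ?(antiB (br y z) (br w x)) ?(antiB x (br w y)) ?(antiB y (br w z)).
expand.
rewrite ?(antiB x (br (br w z) y)) ?(antiB y (br (br x z) w)) ?(antiB z (br (br w y) x)) ?(pairingC v (br (br w x) (br y z))).
expand.
rewrite ?(pairingC v (br (br (br w y) x) z)) ?(pairingC v (br (br (br w z) y) x)) ?(pairingC v (br (br (br x y) z) w)) ?(pairingC v (br (br (br x z) w) y)).
expand.
move=> H0.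
apply: (@lcs (-1) _ _ _ _ H0).
ring.
Qed.

Lemma coad_assoc x y v : - dualop pr (pr x y) v = - dualop pr x (- dualop pr y v).
Proof.
apply: nondeg => w.
have H0 := congr1 (pairing v) (assocP x y w).
have H1 := congr1 (pairing v) (assocP x w y).
move: H0 H1.
expand.
rewrite ?(commP x w) ?(commP y w).
expand.
rewrite ?(commP x (pr w y)) ?(commP y (pr w x)).
expand.
rewrite ?(pairingC v (pr (pr w x) y)) ?(pairingC v (pr (pr w y) x)) ?(pairingC v (pr (pr x y) w)).
expand.
move=> H0 H1.
apply: (@lcs 1 _ _ _ _ H0).
apply: (@lcs (-1) _ _ _ _ H1).
ring.
Qed.

Lemma coad_mp1 x y v : dualop br (pr x y) v = - dualop pr y (dualop br x v) + - dualop pr x (dualop br y v).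
Proof.
apply: nondeg => w.
have H0 := congr1 (pairing v) (leib x y w).
have H1 := congr1 (pairing v) (leib y x w).
have H2 := congr1 (pairing v) (leib w x y).
move: H0 H1 H2.
expand.
rewrite ?(antiB x w) ?(antiB y w) ?(antiB y x) ?(commP x w) ?(commP y w).
expand.
rewrite ?(antiB w (pr x y)) ?(antiB x (pr w y)) ?(antiB y (pr w x)) ?(commP x (br w y)) ?(commP y (br w x)).
expand.
rewrite ?(pairingC v (br (pr w x) y)) ?(pairingC v (br (pr w y) x)) ?(pairingC v (br (pr x y) w)) ?(pairingC v (pr (br w x) y)) ?(pairingC v (pr (br w y) x)) ?(pairingC v (pr (br x y) w)).
expand.
move=> H0 H1 H2.
apply: (@lcs 1 _ _ _ _ H0).
apply: (@lcs 1 _ _ _ _ H1).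
apply: (@lcs 1 _ _ _ _ H2).
ring.
Qed.

Lemma coad_mp2 x y v : - dualop pr (br x y) v = dualop br x (- dualop pr y v) - - dualop pr y (dualop br x v).
Proof.
apply: nondeg => w.
have H0 := congr1 (pairing v) (leib x y w).
move: H0.
expand.
rewrite ?(antiB x w) ?(commP y w).
expand.
rewrite ?(antiB x (pr w y)) ?(commP y (br w x)).
expand.
rewrite ?(pairingC v (br (pr w y) x)) ?(pairingC v (pr (br w x) y)) ?(pairingC v (pr (br x y) w)).
expand.
move=> H0.
apply: (@lcs (-1) _ _ _ _ H0).
ring.
Qed.

Lemma coadj_mp_rep : mp_rep br pr (dualop br) (fun x xi => - dualop pr x xi).
Proof.
have hm : bilin (fun x xi => - dualop pr x xi).
  split=> [xi a x y | x a xi eta]; rewrite /= ?(bDl hdp) ?(bDr hdp) ?(bZl hdp) ?(bZr hdp) opprD scalerN //.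
split; first by split => //; exact: coad_rep.
split; first by split => // x y v; exact: coad_assoc.
split=> x y v; [exact: coad_mp1 | exact: coad_mp2].
Qed.
End Coad.
End Gen.


Arguments coord : simpl never.
Arguments dualop : simpl never.
Arguments pairing : simpl never.

Set Default Proof Using "All".
Section Main.
Variable K : fieldType.
Variable n : nat.
Local Notation V := 'rV[K]_n.
Variables (br1 pr1 br2 pr2 : V -> V -> V).
Variables (mp1 : malcev_poisson br1 pr1) (mp2 : malcev_poisson br2 pr2) (hch : 2%:R != 0 :> K).
Let hbr1 : bilin br1 := mp1.1.1.
Let anti1 : forall x y, br1 x y = - br1 y x := mp1.1.2.1.
Let hpr1 : bilin pr1 := mp1.2.1.
Let comm1 : forall x y, pr1 x y = pr1 y x := mp1.2.2.1.
Let assoc1 : forall x y z, pr1 (pr1 x y) z = pr1 x (pr1 y z) := mp1.2.2.2.1.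
Let leib1 : forall x y z, br1 x (pr1 y z) = pr1 (br1 x y) z + pr1 y (br1 x z) := mp1.2.2.2.2.
Let hbr2 : bilin br2 := mp2.1.1.
Let anti2 : forall x y, br2 x y = - br2 y x := mp2.1.2.1.
Let hpr2 : bilin pr2 := mp2.2.1.
Let comm2 : forall x y, pr2 x y = pr2 y x := mp2.2.2.1.
Let assoc2 : forall x y z, pr2 (pr2 x y) z = pr2 x (pr2 y z) := mp2.2.2.2.1.
Let leib2 : forall x y z, br2 x (pr2 y z) = pr2 (br2 x y) z + pr2 y (br2 x z) := mp2.2.2.2.2.
Let hdbr1 := dualop_bilin hbr1.
Let hdpr1 := dualop_bilin hpr1.
Let hdbr2 := dualop_bilin hbr2.
Let hdpr2 := dualop_bilin hpr2.
Let ra1 x y v : - dualop pr1 (pr1 x y) v = - dualop pr1 x (- dualop pr1 y v) := coad_assoc mp1 x y v.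
Let mpa1 x y v : dualop br1 (pr1 x y) v = - dualop pr1 y (dualop br1 x v) + - dualop pr1 x (dualop br1 y v) := coad_mp1 mp1 x y v.
Let mpb1 x y v : - dualop pr1 (br1 x y) v = dualop br1 x (- dualop pr1 y v) - - dualop pr1 y (dualop br1 x v) := coad_mp2 mp1 x y v.
Let ra2 x y v : - dualop pr2 (pr2 x y) v = - dualop pr2 x (- dualop pr2 y v) := coad_assoc mp2 x y v.
Let mpa2 x y v : dualop br2 (pr2 x y) v = - dualop pr2 y (dualop br2 x v) + - dualop pr2 x (dualop br2 y v) := coad_mp1 mp2 x y v.
Let mpb2 x y v : - dualop pr2 (br2 x y) v = dualop br2 x (- dualop pr2 y v) - - dualop pr2 y (dualop br2 x v) := coad_mp2 mp2 x y v.

Definition prF (u v : V * V) : V * V :=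
  (pr1 u.1 v.1 + - dualop pr2 u.2 v.1 + - dualop pr2 v.2 u.1,
   pr2 u.2 v.2 + - dualop pr1 u.1 v.2 + - dualop pr1 v.1 u.2).
Definition brF := mp_bracket br1 br2 (dualop br1) (dualop br2).

Ltac expand := unfold prF, brF, mp_bracket, omega_d; simpl;
  repeat progress rewrite ?(bDl hbr1) ?(bDr hbr1) ?(bNl hbr1) ?(bNr hbr1) ?(b0l hbr1) ?(b0r hbr1)
  ?(bDl hpr1) ?(bDr hpr1) ?(bNl hpr1) ?(bNr hpr1) ?(b0l hpr1) ?(b0r hpr1)
  ?(bDl hbr2) ?(bDr hbr2) ?(bNl hbr2) ?(bNr hbr2) ?(b0l hbr2) ?(b0r hbr2)
  ?(bDl hpr2) ?(bDr hpr2) ?(bNl hpr2) ?(bNr hpr2) ?(b0l hpr2) ?(b0r hpr2)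
  ?(bDl hdbr1) ?(bDr hdbr1) ?(bNl hdbr1) ?(bNr hdbr1) ?(b0l hdbr1) ?(b0r hdbr1)
  ?(bDl hdpr1) ?(bDr hdpr1) ?(bNl hdpr1) ?(bNr hdpr1) ?(b0l hdpr1) ?(b0r hdpr1)
  ?(bDl hdbr2) ?(bDr hdbr2) ?(bNl hdbr2) ?(bNr hdbr2) ?(b0l hdbr2) ?(b0r hdbr2)
  ?(bDl hdpr2) ?(bDr hdpr2) ?(bNl hdpr2) ?(bNr hdpr2) ?(b0l hdpr2) ?(b0r hdpr2)
  ?coordD ?coordN ?coord0 ?pairingDl ?pairingDr ?pairingNl ?pairingNr ?pairing0l ?pairing0r
  ?(dpL hbr1) ?(dpR hbr1) ?(dpL hpr1) ?(dpR hpr1) ?(dpL hbr2) ?(dpR hbr2) ?(dpL hpr2) ?(dpR hpr2) ?opprK.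

Section Back.
Hypothesis c1 : forall x1 x2 y2, - dualop pr1 x1 (pr2 x2 y2) =
  pr2 (- dualop pr1 x1 x2) y2 + - dualop pr1 (- dualop pr2 x2 x1) y2.
Hypothesis c2 : forall x2 x1 y1, - dualop pr2 x2 (pr1 x1 y1) =
  pr1 (- dualop pr2 x2 x1) y1 + - dualop pr2 (- dualop pr1 x1 x2) y1.
Hypothesis iv1 : forall x1 y1 x2, dualop br2 x2 (pr1 x1 y1) =
  pr1 (dualop br2 x2 x1) y1 + pr1 x1 (dualop br2 x2 y1) - - dualop pr2 (dualop br1 x1 x2) y1
  - - dualop pr2 (dualop br1 y1 x2) x1.
Hypothesis iv2 : forall x2 y2 x1, dualop br1 x1 (pr2 x2 y2) =
  pr2 (dualop br1 x1 x2) y2 + pr2 x2 (dualop br1 x1 y2) - - dualop pr1 (dualop br2 x2 x1) y2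
  - - dualop pr1 (dualop br2 y2 x1) x2.
Hypothesis iv3 : forall x1 y1 x2, br1 x1 (- dualop pr2 x2 y1) - dualop br2 (- dualop pr1 y1 x2) x1 =
  - dualop pr2 (dualop br1 x1 x2) y1 - pr1 (dualop br2 x2 x1) y1 + - dualop pr2 x2 (br1 x1 y1).
Hypothesis iv4 : forall x2 y2 x1, br2 x2 (- dualop pr1 x1 y2) - dualop br1 (- dualop pr2 y2 x1) x2 =
  - dualop pr1 (dualop br2 x2 x1) y2 - pr2 (dualop br1 x1 x2) y2 + - dualop pr1 x1 (br2 x2 y2).

Lemma prF_assoc u v w : prF (prF u v) w = prF u (prF v w).
Proof.
case: u => x1 x2; case: v => y1 y2; case: w => z1 z2.
apply: injective_projections.
apply: coord_inj => j.
have H0 := congr1 (coord j) (assoc1 x1 y1 z1).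
have H1 := congr1 (coord j) (ra2 x2 y2 z1).
have H2 := congr1 (coord j) (ra2 x2 z2 y1).
have H3 := congr1 (coord j) (ra2 z2 x2 y1).
have H4 := congr1 (coord j) (ra2 z2 y2 x1).
have H5 := congr1 (coord j) (c2 x2 y1 z1).
have H6 := congr1 (coord j) (c2 y2 x1 z1).
have H7 := congr1 (coord j) (c2 y2 z1 x1).
have H8 := congr1 (coord j) (c2 z2 y1 x1).
move: H0 H1 H2 H3 H4 H5 H6 H7 H8.
expand.
rewrite ?(comm1 y1 x1) ?(comm1 z1 x1) ?(comm2 z2 x2) ?(comm2 z2 y2).
expand.
rewrite ?(comm1 x1 (dualop pr2 y2 z1)) ?(comm1 x1 (dualop pr2 z2 y1)) ?(comm1 x1 (pr1 y1 z1)).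
expand.
move=> H0 H1 H2 H3 H4 H5 H6 H7 H8.
apply: (@lcs _ 1 _ _ _ _ H0).
apply: (@lcs _ 1 _ _ _ _ H1).
apply: (@lcs _ 1 _ _ _ _ H2).
apply: (@lcs _ (-1) _ _ _ _ H3).
apply: (@lcs _ (-1) _ _ _ _ H4).
apply: (@lcs _ (-1) _ _ _ _ H5).
apply: (@lcs _ (-1) _ _ _ _ H6).
apply: (@lcs _ 1 _ _ _ _ H7).
apply: (@lcs _ 1 _ _ _ _ H8).
ring.

apply: coord_inj => j.
have H0 := congr1 (coord j) (assoc2 x2 y2 z2).
have H1 := congr1 (coord j) (ra1 x1 y1 z2).
have H2 := congr1 (coord j) (ra1 x1 z1 y2).
have H3 := congr1 (coord j) (ra1 z1 x1 y2).
have H4 := congr1 (coord j) (ra1 z1 y1 x2).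
have H5 := congr1 (coord j) (c1 x1 y2 z2).
have H6 := congr1 (coord j) (c1 y1 x2 z2).
have H7 := congr1 (coord j) (c1 y1 z2 x2).
have H8 := congr1 (coord j) (c1 z1 y2 x2).
move: H0 H1 H2 H3 H4 H5 H6 H7 H8.
expand.
rewrite ?(comm1 z1 x1) ?(comm1 z1 y1) ?(comm2 y2 x2) ?(comm2 z2 x2).
expand.
rewrite ?(comm2 x2 (dualop pr1 y1 z2)) ?(comm2 x2 (dualop pr1 z1 y2)) ?(comm2 x2 (pr2 y2 z2)).
expand.
move=> H0 H1 H2 H3 H4 H5 H6 H7 H8.
apply: (@lcs _ 1 _ _ _ _ H0).
apply: (@lcs _ 1 _ _ _ _ H1).
apply: (@lcs _ 1 _ _ _ _ H2).
apply: (@lcs _ (-1) _ _ _ _ H3).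
apply: (@lcs _ (-1) _ _ _ _ H4).
apply: (@lcs _ (-1) _ _ _ _ H5).
apply: (@lcs _ (-1) _ _ _ _ H6).
apply: (@lcs _ 1 _ _ _ _ H7).
apply: (@lcs _ 1 _ _ _ _ H8).
ring.
Qed.

Lemma brF_leib u v w : brF u (prF v w) = prF (brF u v) w + prF v (brF u w).
Proof.
case: u => x1 x2; case: v => y1 y2; case: w => z1 z2.
apply: injective_projections.
apply: coord_inj => j.
have H0 := congr1 (coord j) (leib1 x1 y1 z1).
have H1 := congr1 (coord j) (mpa2 y2 z2 x1).
have H2 := congr1 (coord j) (mpb2 x2 y2 z1).
have H3 := congr1 (coord j) (mpb2 x2 z2 y1).
have H4 := congr1 (coord j) (iv1 y1 z1 x2).
have H5 := congr1 (coord j) (iv3 x1 y1 z2).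
have H6 := congr1 (coord j) (iv3 x1 z1 y2).
move: H0 H1 H2 H3 H4 H5 H6.
expand.
rewrite ?(anti1 x1 (dualop pr2 y2 z1)) ?(anti1 x1 (dualop pr2 z2 y1)) ?(anti1 x1 (pr1 y1 z1)) ?(comm1 y1 (br1 x1 z1)) ?(comm1 y1 (dualop br2 x2 z1)) ?(comm1 y1 (dualop br2 z2 x1)).
expand.
move=> H0 H1 H2 H3 H4 H5 H6.
apply: (@lcs _ 1 _ _ _ _ H0).
apply: (@lcs _ (-1) _ _ _ _ H1).
apply: (@lcs _ (-1) _ _ _ _ H2).
apply: (@lcs _ (-1) _ _ _ _ H3).
apply: (@lcs _ 1 _ _ _ _ H4).
apply: (@lcs _ 1 _ _ _ _ H5).
apply: (@lcs _ 1 _ _ _ _ H6).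
ring.

apply: coord_inj => j.
have H0 := congr1 (coord j) (leib2 x2 y2 z2).
have H1 := congr1 (coord j) (mpa1 y1 z1 x2).
have H2 := congr1 (coord j) (mpb1 x1 y1 z2).
have H3 := congr1 (coord j) (mpb1 x1 z1 y2).
have H4 := congr1 (coord j) (iv2 y2 z2 x1).
have H5 := congr1 (coord j) (iv4 x2 y2 z1).
have H6 := congr1 (coord j) (iv4 x2 z2 y1).
move: H0 H1 H2 H3 H4 H5 H6.
expand.
rewrite ?(anti2 x2 (dualop pr1 y1 z2)) ?(anti2 x2 (dualop pr1 z1 y2)) ?(anti2 x2 (pr2 y2 z2)) ?(comm2 y2 (br2 x2 z2)) ?(comm2 y2 (dualop br1 x1 z2)) ?(comm2 y2 (dualop br1 z1 x2)).
expand.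
move=> H0 H1 H2 H3 H4 H5 H6.
apply: (@lcs _ 1 _ _ _ _ H0).
apply: (@lcs _ (-1) _ _ _ _ H1).
apply: (@lcs _ (-1) _ _ _ _ H2).
apply: (@lcs _ (-1) _ _ _ _ H3).
apply: (@lcs _ 1 _ _ _ _ H4).
apply: (@lcs _ 1 _ _ _ _ H5).
apply: (@lcs _ 1 _ _ _ _ H6).
ring.
Qed.

Lemma prF_inv u v w : omega_d (prF u v) w = omega_d u (prF v w).
Proof.
case: u => x1 x2; case: v => y1 y2; case: w => z1 z2.
expand.
rewrite ?(comm1 y1 x1) ?(comm1 z1 x1) ?(comm2 y2 x2) ?(comm2 z2 x2).
expand.
rewrite ?(pairingC y1 (pr2 x2 z2)) ?(pairingC y2 (pr1 x1 z1)) ?(pairingC z1 (pr2 x2 y2)) ?(pairingC z2 (pr1 x1 y1)).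
expand.
ring.
Qed.

Lemma brF_inv u v w : omega_d (brF u v) w = omega_d u (brF v w).
Proof.
case: u => x1 x2; case: v => y1 y2; case: w => z1 z2.
expand.
rewrite ?(anti1 y1 x1) ?(anti1 z1 x1) ?(anti2 y2 x2) ?(anti2 z2 x2).
expand.
rewrite ?(pairingC y1 (br2 x2 z2)) ?(pairingC y2 (br1 x1 z1)) ?(pairingC z1 (br2 x2 y2)) ?(pairingC z2 (br1 x1 y1)).
expand.
ring.
Qed.

Lemma prF_bilin : bilin prF.
Proof.
split=> [w a u v | u a v w]; case: u => u1 u2; case: v => v1 v2; case: w => w1 w2;
  apply: injective_projections; apply: coord_inj => j; expand; rewrite ?coordZ ?(bZl hpr1) ?(bZr hpr1)
  ?(bZl hpr2) ?(bZr hpr2) ?(bZl hdpr1) ?(bZr hdpr1) ?(bZl hdpr2) ?(bZr hdpr2) ?scalerN ?coordN ?coordZ; expand; ring.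
Qed.

Lemma prF_comm u v : prF u v = prF v u.
Proof.
case: u => u1 u2; case: v => v1 v2; apply: injective_projections; apply: coord_inj => j; expand;
  rewrite ?(comm1 u1) ?(comm2 u2); ring.
Qed.

Lemma back_manin : malcev brF -> std_manin_triple br1 pr1 br2 pr2.
Proof.
move=> hM; exists brF, prF; split.
- split=> //; split; first exact: prF_bilin.
  split; first exact: prF_comm.
  split; [exact: prF_assoc | exact: brF_leib].
- split=> x y; apply: injective_projections; apply: coord_inj => j; expand; ring.
- split=> x y; apply: injective_projections; apply: coord_inj => j; expand; ring.
- split; [exact: prF_inv | exact: brF_inv].
Qed.
End Back.

Section Fwd.
Variables (br pr : V * V -> V * V -> V * V) (hmp : malcev_poisson br pr).
Hypotheses (sb1 : forall x y, br (x, 0) (y, 0) = (br1 x y, 0))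
  (sp1 : forall x y, pr (x, 0) (y, 0) = (pr1 x y, 0))
  (sb2 : forall xi eta, br (0, xi) (0, eta) = (0, br2 xi eta))
  (sp2 : forall xi eta, pr (0, xi) (0, eta) = (0, pr2 xi eta))
  (ip : forall u v w, omega_d (pr u v) w = omega_d u (pr v w))
  (ib : forall u v w, omega_d (br u v) w = omega_d u (br v w)).
Let hb : bilin br := hmp.1.1.
Let antiB : forall x y, br x y = - br y x := hmp.1.2.1.
Let hp : bilin pr := hmp.2.1.
Let commP : forall x y, pr x y = pr y x := hmp.2.2.1.
Let assocP : forall x y z, pr (pr x y) z = pr x (pr y z) := hmp.2.2.2.1.
Let leibP : forall x y z, br x (pr y z) = pr (br x y) z + pr y (br x z) := hmp.2.2.2.2.

Lemma omL (a b w : V) : omega_d (a, b) (0, w) = pairing a w.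
Proof. by rewrite /omega_d /= pairing0r addr0. Qed.
Lemma omR (a b w : V) : omega_d (a, b) (w, 0) = pairing b w.
Proof. by rewrite /omega_d /= pairing0r add0r. Qed.
Lemma omNl (u w : V * V) : omega_d (- u) w = - omega_d u w.
Proof. by case: u => a b; rewrite /omega_d /= !pairingNl opprD. Qed.

Lemma brmix x eta : br (x, 0) (0, eta) = (- dualop br2 eta x, dualop br1 x eta).
Proof.
case E: (br (x, 0) (0, eta)) => [a b].
apply: injective_projections; apply: nondeg => w /=.
  have := ib (x, 0) (0, eta) (0, w); rewrite E sb2 !omL => H.
  by rewrite pairingC H pairingNr (dpR hbr2) opprK.
have := ib (0, eta) (x, 0) (w, 0); rewrite antiB E omNl sb1 !omR => H.
by rewrite pairingC (dpR hbr1) -H opprK.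
Qed.

Lemma prmix x eta : pr (x, 0) (0, eta) = (- dualop pr2 eta x, - dualop pr1 x eta).
Proof.
case E: (pr (x, 0) (0, eta)) => [a b].
apply: injective_projections; apply: nondeg => w /=.
  have := ip (x, 0) (0, eta) (0, w); rewrite E sp2 !omL => H.
  by rewrite pairingC H pairingNr (dpR hpr2) opprK.
have := ip (0, eta) (x, 0) (w, 0); rewrite commP E sp1 !omR => H.
by rewrite pairingC H pairingNr (dpR hpr1) opprK.
Qed.

Lemma pair_split (u : V * V) : u = (u.1, 0) + (0, u.2).
Proof. by case: u => a b; apply: injective_projections; rewrite /= ?addr0 ?add0r. Qed.

Lemma brE u v : br u v = brF u v.
Proof.
case: u => u1 u2; case: v => v1 v2.
rewrite [in LHS](pair_split (u1, u2)) [in LHS](pair_split (v1, v2)) /=.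
rewrite !(bDl hb) !(bDr hb) sb1 sb2 brmix (antiB (0, u2)) brmix.
apply: injective_projections; apply: coord_inj => j; expand; ring.
Qed.

Lemma prE u v : pr u v = prF u v.
Proof.
case: u => u1 u2; case: v => v1 v2.
rewrite [in LHS](pair_split (u1, u2)) [in LHS](pair_split (v1, v2)) /=.
rewrite !(bDl hp) !(bDr hp) sp1 sp2 prmix (commP (0, u2)) prmix.
apply: injective_projections; apply: coord_inj => j; expand; ring.
Qed.

Let prAF u v w : prF (prF u v) w = prF u (prF v w).
Proof. by rewrite -!prE; exact: assocP. Qed.
Let leibF u v w : brF u (prF v w) = prF (brF u v) w + prF v (brF u w).
Proof. by rewrite -!prE -!brE; exact: leibP. Qed.

Lemma fwd_malcev : malcev brF.
Proof.
have -> : brF = br.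
  by apply: functional_extensionality => u; apply: functional_extensionality => v; rewrite brE.
exact: hmp.1.
Qed.

Lemma fwd_c1 : forall x1 x2 y2, - dualop pr1 x1 (pr2 x2 y2) =
  pr2 (- dualop pr1 x1 x2) y2 + - dualop pr1 (- dualop pr2 x2 x1) y2.
Proof.
move=> x1 x2 y2.
apply: coord_inj => j.
have H0 := congr1 (coord j) (congr1 snd (prAF (x1,0) (0,x2) (0,y2))).
move: H0.
expand.
move=> H0.
apply: (@lcs _ (-1) _ _ _ _ H0).
ring.
Qed.

Lemma fwd_c2 : forall x2 x1 y1, - dualop pr2 x2 (pr1 x1 y1) =
  pr1 (- dualop pr2 x2 x1) y1 + - dualop pr2 (- dualop pr1 x1 x2) y1.
Proof.
move=> x2 x1 y1.
apply: coord_inj => j.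
have H0 := congr1 (coord j) (congr1 fst (prAF (x1,0) (y1,0) (0,x2))).
have H1 := congr1 (coord j) (congr1 fst (prAF (x1,0) (0,x2) (y1,0))).
move: H0 H1.
expand.
rewrite ?(comm1 x1 (dualop pr2 x2 y1)).
expand.
move=> H0 H1.
apply: (@lcs _ 1 _ _ _ _ H0).
apply: (@lcs _ (-1) _ _ _ _ H1).
ring.
Qed.

Lemma fwd_iv1 : forall x1 y1 x2, dualop br2 x2 (pr1 x1 y1) =
  pr1 (dualop br2 x2 x1) y1 + pr1 x1 (dualop br2 x2 y1) - - dualop pr2 (dualop br1 x1 x2) y1
  - - dualop pr2 (dualop br1 y1 x2) x1.
Proof.
move=> x1 y1 x2.
apply: coord_inj => j.
have H0 := congr1 (coord j) (congr1 fst (leibF (0,x2) (x1,0) (y1,0))).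
move: H0.
expand.
rewrite ?(comm1 x1 (dualop br2 x2 y1)).
expand.
move=> H0.
apply: (@lcs _ 1 _ _ _ _ H0).
ring.
Qed.

Lemma fwd_iv2 : forall x2 y2 x1, dualop br1 x1 (pr2 x2 y2) =
  pr2 (dualop br1 x1 x2) y2 + pr2 x2 (dualop br1 x1 y2) - - dualop pr1 (dualop br2 x2 x1) y2
  - - dualop pr1 (dualop br2 y2 x1) x2.
Proof.
move=> x2 y2 x1.
apply: coord_inj => j.
have H0 := congr1 (coord j) (congr1 snd (leibF (x1,0) (0,x2) (0,y2))).
move: H0.
expand.
rewrite ?(comm2 x2 (dualop br1 x1 y2)).
expand.
move=> H0.
apply: (@lcs _ 1 _ _ _ _ H0).
ring.
Qed.

Lemma fwd_iv3 : forall x1 y1 x2, br1 x1 (- dualop pr2 x2 y1) - dualop br2 (- dualop pr1 y1 x2) x1 =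
  - dualop pr2 (dualop br1 x1 x2) y1 - pr1 (dualop br2 x2 x1) y1 + - dualop pr2 x2 (br1 x1 y1).
Proof.
move=> x1 y1 x2.
apply: coord_inj => j.
have H0 := congr1 (coord j) (congr1 fst (leibF (x1,0) (y1,0) (0,x2))).
move: H0.
expand.
rewrite ?(anti1 x1 (dualop pr2 x2 y1)) ?(comm1 y1 (dualop br2 x2 x1)).
expand.
move=> H0.
apply: (@lcs _ 1 _ _ _ _ H0).
ring.
Qed.

Lemma fwd_iv4 : forall x2 y2 x1, br2 x2 (- dualop pr1 x1 y2) - dualop br1 (- dualop pr2 y2 x1) x2 =
  - dualop pr1 (dualop br2 x2 x1) y2 - pr2 (dualop br1 x1 x2) y2 + - dualop pr1 x1 (br2 x2 y2).
Proof.
move=> x2 y2 x1.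
apply: coord_inj => j.
have H0 := congr1 (coord j) (congr1 snd (leibF (0,x2) (x1,0) (0,y2))).
move: H0.
expand.
rewrite ?(anti2 x2 (dualop pr1 x1 y2)).
expand.
move=> H0.
apply: (@lcs _ 1 _ _ _ _ H0).
ring.
Qed.
End Fwd.
End Main.

Unset Implicit Arguments.
Unset Default Proof Using.

Theorem mainTheorem2 (K : closedFieldType) (hK : [pchar K] =i pred0) (n : nat)
  (br1 pr1 br2 pr2 : 'rV[K]_n -> 'rV[K]_n -> 'rV[K]_n) :
  malcev_poisson br1 pr1 -> malcev_poisson br2 pr2 ->
  (std_manin_triple br1 pr1 br2 pr2 <->
   matched_pair br1 pr1 br2 pr2
     (dualop br1) (fun x xi => - dualop pr1 x xi)
     (dualop br2) (fun xi x => - dualop pr2 xi x)).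
Proof.
move=> M1 M2.
have hch : (2%:R : K) != 0 by move/GRing.pcharf0P: hK => ->.
have R1 := coadj_mp_rep M1 hch.
have R2 := coadj_mp_rep M2 hch.
split.
- case=> br [pr [hmp [sb1 sp1] [sb2 sp2] [ip ib]]].
  split; [|split; [|split]].
  + split; [exact: R1.2.1 | exact: R2.2.1 |
      exact: (fwd_c1 M1 M2 hch hmp sb1 sp1 sb2 sp2 ip ib) |
      exact: (fwd_c2 M1 M2 hch hmp sb1 sp1 sb2 sp2 ip ib)].
  + split; [exact: R1.1 | exact: R2.1 | exact: (fwd_malcev M1 M2 hch hmp sb1 sp1 sb2 sp2 ip ib)].
  + by split.
  + split; [exact: (fwd_iv1 M1 M2 hch hmp sb1 sp1 sb2 sp2 ip ib) |
      exact: (fwd_iv2 M1 M2 hch hmp sb1 sp1 sb2 sp2 ip ib) |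
      exact: (fwd_iv3 M1 M2 hch hmp sb1 sp1 sb2 sp2 ip ib) |
      exact: (fwd_iv4 M1 M2 hch hmp sb1 sp1 sb2 sp2 ip ib)].
- case=> [[_ _ c1 c2] [[_ _ hM] [_ [iv1 iv2 iv3 iv4]]]].
  exact: (back_manin M1 M2 hch c1 c2 iv1 iv2 iv3 iv4 hM).
Qed.
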